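(* Let $n\le k$ and let $\hat C$ be an estimator that takes $n$ balls drawn uniformly at random without replacement from a $k$-ball urn and, for every $k$-ball urn, has estimation error $|\hat C-C|$ less than $\Delta$ with probability at least $1-\delta$. Let $P$ be any discrete distribution whose nonzero probabilities are all at least $1/\ell$, and let $S(P)$ be its support size. Then applying $\hat C$ to $n$ i.i.d. samples from $P$ yields $|\hat C-S(P)|\le2\Delta$ with probability at least $1-\delta-\binom{\ell}{\Delta}\big(1-\frac{\Delta}{\ell}\big)^k$.
   Context: For an urn of $k$ colored balls, $C$ denotes its number of distinct colors. $\Delta$ and $\ell$ are positive integers. *)

(* Defs.v *)
From mathcomp Require Import all_boot all_order all_algebra.
Set Implicit Arguments. Unset Strict Implicit. Unset Printing Implicit Defensive.
Import Order.TTheory GRing.Theory Num.Theory.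
Local Open Scope ring_scope.

Section Defs.
Variables (R : realFieldType) (T : finType).

(* An urn of k balls: the colour of each ball. *)
Definition ncolors (k : nat) (u : {ffun 'I_k -> T}) : nat :=
  #|[set u i | i : 'I_k]|.

Definition draw (n k : nat) (u : {ffun 'I_k -> T}) (f : {ffun 'I_n -> 'I_k})
  : {ffun 'I_n -> T} := [ffun i => u (f i)].

(* Probability that an event E on the (ordered) sample holds when n balls are
   drawn uniformly at random without replacement from the urn u:
   the draw is a uniformly random injection 'I_n -> 'I_k. *)
Definition wor_prob (n k : nat) (E : {ffun 'I_n -> T} -> bool)
  (u : {ffun 'I_k -> T}) : R :=
  (#|[set f : {ffun 'I_n -> 'I_k} | injectiveb f && E (draw u f)]|%:R)
  / (#|[set f : {ffun 'I_n -> 'I_k} | injectiveb f]|%:R).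

Definition iid_prob (n : nat) (P : {ffun T -> R}) (E : {ffun 'I_n -> T} -> bool) : R :=
  \sum_(s : {ffun 'I_n -> T} | E s) \prod_(i < n) P (s i).

Definition supp_size (P : {ffun T -> R}) : nat := #|[set x | P x != 0]|.

End Defs.

Arguments wor_prob {R T n k} E u.
Arguments iid_prob {R T n} P E.
Arguments supp_size {R T} P.
Arguments ncolors {T k} u.

(* Main.v *)
Require Import Defs.
From mathcomp Require Import all_boot all_order all_algebra.
From mathcomp Require Import ring lra zify.
Set Implicit Arguments. Unset Strict Implicit. Unset Printing Implicit Defensive.
Import Order.TTheory GRing.Theory Num.Theory.
Local Open Scope ring_scope.

Section Helpers.
Variables (R : realFieldType) (T : finType).

Lemma prod_bool (I : finType) (b : I -> bool) :
  \prod_i ((b i)%:R : R) = ([forall i, b i])%:R.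
Proof.
case: (boolP [forall i, b i]) => [/forallP H | /forallPn [i Hi]].
  by rewrite big1 // => i _; rewrite H.
by rewrite (bigD1 i) //= (negbTE Hi) mul0r.
Qed.

Lemma pick_inj n k (f : 'I_n -> 'I_k) (finj : injective f) i0 :
  [pick i | f i == f i0] = Some i0.
Proof.
case: pickP => [i /eqP/finj -> // | H].
by have := H i0; rewrite eqxx.
Qed.

Lemma prod_pick n k (f : 'I_n -> 'I_k) (finj : injective f)
  (H : 'I_k -> option 'I_n -> R) :
  (forall j, H j None = 1) ->
  \prod_j H j [pick i | f i == j] = \prod_i H (f i) (Some i).
Proof.
move=> H1.
rewrite (bigID (mem [set f x | x in [set: 'I_n]])) /=.
rewrite [X in _ * X]big1 ?mulr1; last first.
  move=> j Hj; case: pickP => [i /eqP Hi | _]; last exact: H1.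
  by move: Hj; rewrite -Hi imset_f ?inE.
rewrite (big_imset (fun j => H j [pick i | f i == j])) /=; last by move=> x y _ _; apply: finj.
by apply: eq_big => [i|i _]; rewrite ?inE ?pick_inj.
Qed.

Variable P : {ffun T -> R}.
Hypothesis P1 : \sum_x P x = 1.

Lemma mix_point n k (f : {ffun 'I_n -> 'I_k}) (finj : injective f) (t : {ffun 'I_n -> T}) :
  \sum_(u : {ffun 'I_k -> T}) (\prod_j P (u j)) * ((draw u f == t)%:R : R)
  = \prod_i P (t i).
Proof.
pose h j x : R := if [pick i | f i == j] is Some i then (x == t i)%:R else 1.
have E1 u : ((draw u f == t)%:R : R) = \prod_j h j (u j).
  rewrite /h (@prod_pick _ _ _ finj (fun j (o : option 'I_n) => if o is Some i then ((u j == t i)%:R : R) else 1)) //.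
  rewrite prod_bool; suff -> : (draw u f == t) = [forall i, u (f i) == t i] by [].
  apply/idP/forallP => [/eqP <- i | Hi]; first by rewrite ffunE.
  by apply/eqP/ffunP => i; rewrite ffunE; apply/eqP.
transitivity (\sum_(u : {ffun 'I_k -> T}) \prod_j (P (u j) * h j (u j))).
  by apply: eq_bigr => u _; rewrite E1 big_split.
rewrite -(bigA_distr_bigA (fun j x => P x * h j x)) /=.
rewrite /h (@prod_pick _ _ _ finj (fun j (o : option 'I_n) => \sum_x P x * if o is Some i then ((x == t i)%:R : R) else 1)) /=; last first.
  by move=> j; under eq_bigr do rewrite mulr1.
apply: eq_bigr => i _.
rewrite (bigD1 (t i)) //= eqxx mulr1 big1 ?addr0 // => x /negbTE ->.
by rewrite mulr0.
Qed.

Lemma mix n k (f : {ffun 'I_n -> 'I_k}) (finj : injective f) (g : {ffun 'I_n -> T} -> R) :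
  \sum_(u : {ffun 'I_k -> T}) (\prod_j P (u j)) * g (draw u f)
  = \sum_(t : {ffun 'I_n -> T}) (\prod_i P (t i)) * g t.
Proof.
have E u : g (draw u f) = \sum_(t : {ffun 'I_n -> T}) ((draw u f == t)%:R * g t).
  rewrite (bigD1 (draw u f)) //= eqxx mul1r big1 ?addr0 // => t.
  by rewrite eq_sym => /negbTE ->; rewrite mul0r.
under eq_bigr do rewrite E mulr_sumr.
rewrite exchange_big /=; apply: eq_bigr => t _.
rewrite -(mix_point finj t) mulr_suml; apply: eq_bigr => u _.
by rewrite mulrA.
Qed.

Lemma iid_eq n (A : {ffun 'I_n -> T} -> bool) :
  iid_prob P A = \sum_(t : {ffun 'I_n -> T}) (\prod_i P (t i)) * (A t)%:R.
Proof.
rewrite /iid_prob big_mkcond /=; apply: eq_bigr => t _.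
by case: (A t); rewrite ?mulr1 ?mulr0.
Qed.

Lemma card_sum (I : finType) (p q : pred I) :
  #|[set x | p x && q x]| = (\sum_(x | p x) q x)%N.
Proof.
rewrite -sum1_card big_mkcond /= [RHS]big_mkcond /=.
by apply: eq_bigr => x _; rewrite inE; case: (p x); case: (q x).
Qed.

Lemma iid_mix n k (hnk : (n <= k)%N) (A : {ffun 'I_n -> T} -> bool) :
  iid_prob P A = \sum_(u : {ffun 'I_k -> T}) (\prod_j P (u j)) * wor_prob A u.
Proof.
set N := #|[set f : {ffun 'I_n -> 'I_k} | injectiveb f]|.
have N0 : (N%:R : R) != 0.
  rewrite pnatr_eq0 -lt0n; apply/card_gt0P.
  exists [ffun i => widen_ord hnk i]; rewrite inE; apply/injectiveP => x y.
  by rewrite !ffunE => /(congr1 val) /= /val_inj.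
have E u : wor_prob A u = (\sum_(f : {ffun 'I_n -> 'I_k} | injectiveb f) ((A (draw u f))%:R : R)) / N%:R.
  by rewrite /wor_prob card_sum natr_sum.
under eq_bigr do rewrite E mulrA mulr_sumr.
rewrite -mulr_suml exchange_big /=.
under eq_bigr => f Hf.
  rewrite (mix (injectiveP _ Hf) (fun s => (A s)%:R)) -iid_eq.
  over.
rewrite sumr_const (_ : #|_| = N).
  by rewrite -[iid_prob P A *+ N]mulr_natr mulfK.
rewrite /N; apply: eq_card => f; rewrite inE; exact: erefl.
Qed.

End Helpers.

Section Bad.
Variables (R : realFieldType) (T : finType).
Variable P : {ffun T -> R}.
Hypothesis P0 : forall x, 0 <= P x.
Hypothesis P1 : \sum_x P x = 1.
Variable l : nat.
Hypothesis hl : (0 < l)%N.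
Hypothesis Pl : forall x, P x != 0 -> l%:R^-1 <= P x.

Lemma w_ge0 k (u : {ffun 'I_k -> T}) : 0 <= \prod_j P (u j).
Proof. by apply: prodr_ge0 => j _. Qed.

Lemma w_supp k (u : {ffun 'I_k -> T}) :
  \prod_j P (u j) != 0 -> (ncolors u <= supp_size P)%N.
Proof.
move/prodf_neq0 => H; apply: subset_leq_card; apply/subsetP => x /imsetP [j _ ->].
by rewrite inE; apply: H.
Qed.

Lemma w_sum k : \sum_(u : {ffun 'I_k -> T}) \prod_j P (u j) = 1.
Proof.
rewrite -(bigA_distr_bigA (fun (_ : 'I_k) x => P x)) /=.
by rewrite big1 // => j _; exact: P1.
Qed.

Lemma S_le_l : (supp_size P <= l)%N.
Proof.
have lpos : (0 : R) < l%:R by rewrite ltr0n.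
have H : (supp_size P)%:R / l%:R <= (1 : R).
  rewrite -[X in _ <= X]P1 (bigID (mem [set x | P x != 0])) /=.
  rewrite [X in _ <= _ + X]big1 ?addr0; last first.
    by move=> x; rewrite inE negbK => /eqP.
  rewrite /supp_size mulr_natl -sumr_const.
  apply: ler_sum => x; rewrite inE; exact: Pl.
by move: H; rewrite ler_pdivrMr // mul1r ler_nat.
Qed.

Lemma q_ge0 Delta : (Delta <= l)%N -> (0 : R) <= 1 - Delta%:R / l%:R.
Proof.
move=> h; rewrite subr_ge0 ler_pdivrMr ?ltr0n // mul1r ler_nat //.
Qed.

Lemma bad_bound k Delta :
  \sum_(u : {ffun 'I_k -> T} | (ncolors u + Delta <= supp_size P)%N) \prod_j P (u j)
  <= 'C(l, Delta)%:R * (1 - Delta%:R / l%:R) ^+ k.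
Proof.
set Sup := [set x | P x != 0].
set Ds := [set D : {set T} | D \subset Sup & #|D| == Delta].
pose cnt (u : {ffun 'I_k -> T}) : R := \sum_(D in Ds) ([forall j, u j \notin D])%:R.
have cnt0 u : 0 <= cnt u by apply: sumr_ge0 => D _; rewrite ler0n.
apply: (@le_trans _ _ (\sum_(u : {ffun 'I_k -> T}) \prod_j P (u j) * cnt u)).
  apply: (@le_trans _ _ (\sum_(u : {ffun 'I_k -> T} | (ncolors u + Delta <= supp_size P)%N)
                           \prod_j P (u j) * cnt u)).
    apply: ler_sum => u bad.
    have [->|wn0] := eqVneq (\prod_j P (u j)) 0; first by rewrite mul0r.
    apply: ler_peMr; first exact: w_ge0.
    set im := [set u i | i : 'I_k].
    have imS : im \subset Sup.
      apply/subsetP => x /imsetP [j _ ->]; rewrite inE.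
      by move/prodf_neq0: wn0; apply.
    have cB : (Delta <= #|Sup :\: im|)%N.
      rewrite cardsD (setIidPr imS).
      move: bad; rewrite /supp_size -/Sup /ncolors -/im. lia.
    have : (0 < #|[set D : {set T} | D \subset Sup :\: im & #|D| == Delta]|)%N.
      by rewrite cards_draws bin_gt0.
    case/card_gt0P => D0; rewrite inE => /andP [D0s /eqP D0c].
    have D0in : D0 \in Ds.
      rewrite inE D0c eqxx andbT; apply: (subset_trans D0s); exact: subsetDl.
    rewrite /cnt (bigD1 D0) //=.
    have -> : [forall j, u j \notin D0].
      apply/forallP => j; apply/negP => /(subsetP D0s).
      by rewrite inE imset_f ?inE.
    by rewrite lerDl; apply: sumr_ge0 => D _; rewrite ler0n.
  rewrite [X in _ <= X](bigID (fun u : {ffun 'I_k -> T} => (ncolors u + Delta <= supp_size P)%N)) /=.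
  rewrite lerDl; apply: sumr_ge0 => u _; apply: mulr_ge0 => //; exact: w_ge0.
under eq_bigr do rewrite mulr_sumr.
rewrite exchange_big /=.
set q := 1 - Delta%:R / l%:R.
apply: (@le_trans _ _ (\sum_(D in Ds) q ^+ k)).
  apply: ler_sum => D; rewrite inE => /andP [DS /eqP Dc].
  have E1 : \sum_(u : {ffun 'I_k -> T}) \prod_j P (u j) * ([forall j, u j \notin D])%:R
          = \prod_(j < k) \sum_x (P x * (x \notin D)%:R).
    rewrite (bigA_distr_bigA (fun (_ : 'I_k) x => P x * (x \notin D)%:R)) /=.
    by apply: eq_bigr => u _; rewrite -prod_bool -big_split.
  rewrite E1 prodr_const card_ord.
  have E2 : \sum_x P x * (x \notin D)%:R = \sum_(x | x \notin D) P x.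
    rewrite [RHS]big_mkcond /=; apply: eq_bigr => x _.
    by case: (x \notin D); rewrite ?mulr1 ?mulr0.
  have E3 : 1 = \sum_(x in D) P x + \sum_(x | x \notin D) P x.
    by rewrite -[LHS]P1 (bigID (mem D)).
  have E4 : (Delta%:R / l%:R : R) <= \sum_(x in D) P x.
    rewrite -Dc mulrC mulr_natr -sumr_const.
    apply: ler_sum => x xD; apply: Pl.
    by move: (subsetP DS x xD); rewrite inE.
  have E5 : 0 <= \sum_(x | x \notin D) P x by apply: sumr_ge0.
  rewrite E2; apply: lerXn2r; rewrite ?nnegrE /q //.
    set d := Delta%:R / l%:R in E4 *; lra.
  set d := Delta%:R / l%:R in E4 *; lra.
rewrite sumr_const /Ds cards_draws -/Sup.
rewrite -[q ^+ k *+ _]mulr_natl.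
have [hS|hS] := leqP Delta #|Sup|.
  have hDl : (Delta <= l)%N by apply: (leq_trans hS); exact: S_le_l.
  apply: ler_wpM2r; first by apply: exprn_ge0; exact: q_ge0.
  by rewrite ler_nat; apply: leq_bin2l; exact: S_le_l.
rewrite bin_small // mul0r.
have [hDl|hDl] := leqP Delta l.
  by apply: mulr_ge0; rewrite ?ler0n //; apply: exprn_ge0; exact: q_ge0.
by rewrite bin_small // mul0r.
Qed.

End Bad.

Section Wor.
Variables (R : realFieldType) (T : finType).

Lemma wor_ge0 n k (E : {ffun 'I_n -> T} -> bool) (u : {ffun 'I_k -> T}) :
  (0 : R) <= wor_prob E u.
Proof. by rewrite /wor_prob divr_ge0 ?ler0n. Qed.

Lemma wor_mono n k (E F : {ffun 'I_n -> T} -> bool) (u : {ffun 'I_k -> T}) :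
  (forall s, E s -> F s) -> (wor_prob E u : R) <= wor_prob F u.
Proof.
move=> H; rewrite /wor_prob ler_wpM2r ?invr_ge0 ?ler0n // ler_nat.
apply: subset_leq_card; apply/subsetP => f; rewrite !inE => /andP [-> /H] //.
Qed.

Lemma wor_le1 n k (hnk : (n <= k)%N) (E : {ffun 'I_n -> T} -> bool) (u : {ffun 'I_k -> T}) :
  (wor_prob E u : R) <= 1.
Proof.
apply: (le_trans (wor_mono (F := xpredT) u _)) => //.
rewrite /wor_prob (_ : [set f : {ffun 'I_n -> 'I_k} | injectiveb f && xpredT (draw u f)]
    = [set f : {ffun 'I_n -> 'I_k} | injectiveb f]); last by apply/setP => f; rewrite !inE andbT.
rewrite divff // pnatr_eq0 -lt0n; apply/card_gt0P.
exists [ffun i => widen_ord hnk i]; rewrite inE; apply/injectiveP => x y.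
by rewrite !ffunE => /(congr1 val) /= /val_inj.
Qed.

End Wor.

Theorem lemma5 (R : realFieldType) (T : finType) (n k Delta l : nat) (delta : R)
  (Chat : {ffun 'I_n -> T} -> R) :
  (n <= k)%N -> (0 < Delta)%N -> (0 < l)%N ->
  (forall u : {ffun 'I_k -> T},
     1 - delta <= wor_prob (fun s => `|Chat s - (ncolors u)%:R| < Delta%:R) u) ->
  forall P : {ffun T -> R},
    (forall x, 0 <= P x) -> \sum_x P x = 1 ->
    (forall x, P x != 0 -> l%:R^-1 <= P x) ->
    1 - delta - 'C(l, Delta)%:R * (1 - Delta%:R / l%:R) ^+ k
      <= iid_prob P (fun s => `|Chat s - (supp_size P)%:R| <= 2 * Delta%:R).
Proof.
move=> hnk hD hl Hw P P0 P1 Pl.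
set A := fun s => `|Chat s - (supp_size P)%:R| <= 2 * Delta%:R.
set B := 'C(l, Delta)%:R * (1 - Delta%:R / l%:R) ^+ k.
set bad := fun u : {ffun 'I_k -> T} => (ncolors u + Delta <= supp_size P)%N.
set b := \sum_(u : {ffun 'I_k -> T} | bad u) \prod_j P (u j).
have hb : b <= B by apply: bad_bound.
have b0 : 0 <= b by apply: sumr_ge0 => u _; apply: w_ge0.
have iid0 : 0 <= iid_prob P A.
  by apply: sumr_ge0 => s _; apply: prodr_ge0 => i _.
have [x0 _] : exists x0 : T, true.
  case: (pickP (fun _ : T => true)) => [x0 _|H]; first by exists x0.
  move: P1; rewrite big1 => [/eqP|x]; last by have := H x.
  by rewrite eq_sym oner_eq0.
have hd0 : 0 <= delta.
  have := Hw [ffun _ => x0].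
  have : (wor_prob (fun s => `|Chat s - (ncolors [ffun _ : 'I_k => x0])%:R| < Delta%:R) [ffun _ : 'I_k => x0] : R) <= 1.
    exact: wor_le1.
  lra.
have [hd1|hd1] := lerP delta 1; last by lra.
rewrite (iid_mix P1 hnk).
have step : \sum_(u : {ffun 'I_k -> T} | ~~ bad u) \prod_j P (u j) * (1 - delta)
   <= \sum_(u : {ffun 'I_k -> T}) \prod_j P (u j) * wor_prob A u.
  rewrite [X in _ <= X](bigID bad) /=.
  rewrite -[X in X <= _]add0r; apply: lerD.
    by apply: sumr_ge0 => u _; apply: mulr_ge0; [apply: w_ge0 | apply: wor_ge0].
  apply: ler_sum => u gu.
  have [->|wn0] := eqVneq (\prod_j P (u j)) 0; first by rewrite !mul0r.
  apply: ler_wpM2l; first exact: w_ge0.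
  apply: (le_trans (Hw u)); apply: wor_mono => s.
  have hcS := w_supp wn0.
  rewrite /A ltr_norml ler_norml => /andP [h1 h2].
  have e1 : ((ncolors u)%:R : R) <= (supp_size P)%:R by rewrite ler_nat.
  have e2 : ((supp_size P)%:R : R) < (ncolors u)%:R + Delta%:R.
    by rewrite -natrD ltr_nat; move: gu; rewrite /bad; lia.
  apply/andP; split; lra.
have E : \sum_(u : {ffun 'I_k -> T} | ~~ bad u) \prod_j P (u j) = 1 - b.
  have Hs := w_sum P1 k; rewrite (bigID bad) /= -/b in Hs; lra.
rewrite -mulr_suml E in step.
have := mulr_ge0 hd0 b0.
nra.
Qed.
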